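(* Let $p>1$ and let $\widetilde{T}_0, T$ be constants with $0\le\widetilde{T}_0<T$. Suppose that $A\in C^1([\widetilde{T}_0,T))$, $B\in C^1([0,T))$ and $m\in C^1([0,T))$ are strictly positive functions, that $B$ is decreasing, and that there are constants $\overline{m},\underline{m}>0$ with $\underline{m}\le m(t)\le\overline{m}$ for $t\ge0$. Define \[ h(t):=B(t)^{1/2}A(t)^{(p-1)/2-\delta}, \] where $\delta$ is a constant with $0<\delta<(p-1)/2$ such that $h'(t)\ge0$ for $t\ge\widetilde{T}_0$. Assume that $F\in C^2([0,T))$ satisfies \[ F(t)\ge A(t)\ \text{for } t\ge\widetilde{T}_0,\qquad \{m(t)F'(t)\}'\ge B(t)|F(t)|^p\ \text{for } t\ge0, \] \[ F(0)\ge0,\quad F'(0)\ge0,\quad F(0)+F'(0)>0 . \] If $F'(0)=0$, suppose moreover that there exists a time $\widetilde{t}>0$ such that $F(\widetilde{t})\ge 2F(0)$. Define $\widetilde{T}_1:=\overline{m}\,\underline{m}^{-1}F(0)/F'(0)$ if $F'(0)\ne0$, and $\widetilde{T}_1:=\widetilde{t}$ if $F'(0)=0$. Then, for $\widetilde{T}\ge\max\{\widetilde{T}_0,\widetilde{T}_1\}$, we have $T\le 3\widetilde{T}$, provided that \[ \widetilde{T}\,h(\widetilde{T})\,A(\widetilde{T})^{\delta}\ge \delta^{-1}\,\overline{m}\sqrt{(p+1)/\underline{m}} . \] *)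

(* Defs.v *)
From Stdlib Require Import Reals Lra.
From Coquelicot Require Import Coquelicot.
Open Scope R_scope.

(* x^y for x >= 0 and real y > 0, with the convention 0^y = 0
   (Stdlib's Rpower 0 y would be 1, which is wrong for |F|^p). *)
Definition powR (x y : R) : R := if Rle_dec x 0 then 0 else Rpower x y.

(* f is C^1 on the half-open interval [a,b) with derivative f':
   f has derivative f' t at every interior point, and f, f' are continuous
   on [a,b) (continuity within [a,b), i.e. right-continuity at a).
   By the mean value theorem this gives the one-sided derivative f' a at a. *)
Definition C1_on (a b : R) (f f' : R -> R) : Prop :=
  (forall t, a < t < b -> is_derive f t (f' t)) /\
  (forall t, a <= t < b ->
     filterlim f (within (fun s => a <= s < b) (locally t)) (locally (f t))) /\
  (forall t, a <= t < b ->
     filterlim f' (within (fun s => a <= s < b) (locally t)) (locally (f' t))).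

Definition hfun (A B : R -> R) (p delta : R) (t : R) : R :=
  powR (B t) (1/2) * powR (A t) ((p - 1) / 2 - delta).

Definition T1til (mbar mlow F0 F1_0 ttil : R) : R :=
  if Req_EM_T F1_0 0 then ttil else mbar / mlow * F0 / F1_0.

(* Main.v *)
Require Import Defs.
From Stdlib Require Import Reals Lra.
From Coquelicot Require Import Coquelicot.
Open Scope R_scope.

Lemma ballR (x e y : R) : ball x e y <-> Rabs (y - x) < e.
Proof. reflexivity. Qed.

Lemma within_sub (f : R -> R) (D1 D2 : R -> Prop) (x l : R) :
  (forall s, D1 s -> D2 s) ->
  filterlim f (within D2 (locally x)) (locally l) ->
  filterlim f (within D1 (locally x)) (locally l).
Proof.
  intros HD H. apply filterlim_filter_le_1 with (2 := H).
  intros P HP. unfold within in *. apply filter_imp with (2 := HP). auto.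
Qed.

Lemma lim_mult {T} (F : (T -> Prop) -> Prop) {FF : Filter F} (f g : T -> R) a b :
  filterlim f F (locally a) -> filterlim g F (locally b) ->
  filterlim (fun x => f x * g x) F (locally (a * b)).
Proof.
  intros Hf Hg. eapply filterlim_comp_2; [exact Hf | exact Hg |].
  apply (@filterlim_mult R_AbsRing a b).
Qed.

Lemma lim_plus {T} (F : (T -> Prop) -> Prop) {FF : Filter F} (f g : T -> R) a b :
  filterlim f F (locally a) -> filterlim g F (locally b) ->
  filterlim (fun x => f x + g x) F (locally (a + b)).
Proof.
  intros Hf Hg. eapply filterlim_comp_2; [exact Hf | exact Hg |].
  apply (@filterlim_plus R_AbsRing R_NormedModule a b).
Qed.

Lemma deriv_cont (f : R -> R) x l : is_derive f x l -> filterlim f (locally x) (locally (f x)).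
Proof. intros H. apply (ex_derive_continuous (K:=R_AbsRing) (V:=R_NormedModule)). exists l; exact H. Qed.

Lemma cont_within (f : R -> R) (D : R -> Prop) x :
  filterlim f (locally x) (locally (f x)) -> filterlim f (within D (locally x)) (locally (f x)).
Proof. intros H. eapply filterlim_filter_le_1; [apply filter_le_within|exact H]. Qed.

Lemma mono2 (g g' : R -> R) a b : a <= b ->
  (forall x, a < x < b -> is_derive g x (g' x)) ->
  (forall x, a <= x <= b -> 0 <= g' x) ->
  (forall x, a <= x <= b -> continuity_pt g x) -> g a <= g b.
Proof.
  intros Hab Hd Hp Hc.
  destruct (MVT_gen g a b g') as [c [Hc1 Hc2]].
  - rewrite Rmin_left, Rmax_right by lra. exact Hd.
  - rewrite Rmin_left, Rmax_right by lra. exact Hc.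
  - rewrite Rmin_left, Rmax_right in Hc1 by lra.
    assert (0 <= g' c) by (apply Hp; lra). nra.
Qed.

Lemma lim_ball (f : R -> R) (F : (R -> Prop) -> Prop) l (e : posreal) :
  filterlim f F (locally l) -> F (fun y => Rabs (f y - l) < e).
Proof. intros H. apply (H (fun z => Rabs (z - l) < e)). exists e. intros y Hy. exact Hy. Qed.

Lemma mono_right (g g' : R -> R) a b :
  (forall x, a < x < b -> is_derive g x (g' x)) ->
  (forall x, a < x < b -> 0 <= g' x) ->
  filterlim g (within (fun s => a <= s < b) (locally a)) (locally (g a)) ->
  forall s t, a <= s -> s <= t -> t < b -> g s <= g t.
Proof.
  intros Hd Hp Hc.
  assert (Hint : forall s t, a < s -> s <= t -> t < b -> g s <= g t).
  { intros s t H1 H2 H3. apply (mono2 g g'); try lra.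
    - intros; apply Hd; lra.
    - intros; apply Hp; lra.
    - intros x Hx. apply continuity_pt_filterlim. apply (deriv_cont g x (g' x)). apply Hd; lra. }
  intros s t H1 H2 H3.
  destruct (Req_dec s a) as [->|Hs]; [|apply Hint; lra].
  destruct (Req_dec t a) as [->|Ht]; [lra|].
  destruct (Rle_or_lt (g a) (g t)) as [Hle|Hlt]; [exact Hle|exfalso].
  assert (He : 0 < g a - g t) by lra.
  pose proof (lim_ball g _ (g a) (mkposreal _ He) Hc) as [del Hdel].
  set (y := a + Rmin (del/2) ((t - a)/2)).
  assert (Hm1 : 0 < Rmin (del/2) ((t - a)/2)) by (apply Rmin_pos; pose proof (cond_pos del); lra).
  assert (Hm2 : Rmin (del/2) ((t - a)/2) <= del/2) by apply Rmin_l.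
  assert (Hm3 : Rmin (del/2) ((t - a)/2) <= (t-a)/2) by apply Rmin_r.
  assert (Hy : Rabs (g y - g a) < g a - g t).
  { apply Hdel. apply ballR. unfold y. rewrite Rabs_right; lra. unfold y; lra. }
  assert (g y <= g t) by (apply Hint; unfold y; lra).
  apply Rabs_def2 in Hy. lra.
Qed.

Lemma powR_pos x y : 0 < x -> powR x y = Rpower x y.
Proof. intros H. unfold powR. destruct (Rle_dec x 0); [lra|reflexivity]. Qed.

Lemma powR_ge0 x y : 0 <= powR x y.
Proof. unfold powR. destruct (Rle_dec x 0); [lra|]. unfold Rpower. left; apply exp_pos. Qed.

Lemma Rpower_pos x y : 0 < Rpower x y.
Proof. unfold Rpower; apply exp_pos. Qed.

Lemma is_derive_Rpower_comp (f : R -> R) x d y :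
  0 < f x -> is_derive f x d ->
  is_derive (fun s => Rpower (f s) y) x (d * (y * Rpower (f x) (y - 1))).
Proof.
  intros Hp Hd.
  apply (is_derive_comp (fun u => Rpower u y) f x).
  - apply is_derive_Reals. apply derivable_pt_lim_power; exact Hp.
  - exact Hd.
Qed.

Lemma loc_pos (f : R -> R) x : filterlim f (locally x) (locally (f x)) -> 0 < f x ->
  locally x (fun s => 0 < f s).
Proof.
  intros Hc Hp. pose proof (lim_ball f _ (f x) (mkposreal _ Hp) Hc) as H.
  apply filter_imp with (2 := H). simpl. intros s Hs. apply Rabs_def2 in Hs. lra.
Qed.

Lemma is_derive_powR_comp (f : R -> R) x d y :
  0 < f x -> is_derive f x d ->
  is_derive (fun s => powR (f s) y) x (d * (y * Rpower (f x) (y - 1))).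
Proof.
  intros Hp Hd.
  apply is_derive_ext_loc with (fun s => Rpower (f s) y).
  - apply filter_imp with (2 := loc_pos f x (deriv_cont f x d Hd) Hp).
    intros s Hs. symmetry; apply powR_pos; exact Hs.
  - apply is_derive_Rpower_comp; assumption.
Qed.

Lemma powR_cont x y : 0 < x -> filterlim (fun u => powR u y) (locally x) (locally (powR x y)).
Proof.
  intros Hx. apply (deriv_cont (fun u => powR u y) x (1 * (y * Rpower x (y - 1)))).
  apply (is_derive_powR_comp (fun u => u)); [exact Hx|].
  apply (is_derive_id (K:=R_AbsRing)).
Qed.

Lemma is_derive_eq (f : R -> R) x l l' : is_derive f x l -> l = l' -> is_derive f x l'.
Proof. intros H ->; exact H. Qed.

Lemma Rpower2 x : 0 < x -> Rpower x 2 = x * x.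
Proof. intros H. assert (E : INR 2 = 2) by (simpl; ring). rewrite <- E, Rpower_pow by exact H. simpl; ring. Qed.

Theorem lemma3p1
  (p T0 T : R) (A A1 B B1 m m1 F F1 F2 : R -> R)
  (delta mbar mlow ttil Ttil : R) :
  1 < p -> 0 <= T0 -> T0 < T ->
  C1_on T0 T A A1 -> C1_on 0 T B B1 -> C1_on 0 T m m1 ->
  (forall t, T0 <= t < T -> 0 < A t) ->
  (forall t, 0 <= t < T -> 0 < B t) ->
  (forall t, 0 <= t < T -> 0 < m t) ->
  (forall s t, 0 <= s -> s <= t -> t < T -> B t <= B s) ->
  0 < mbar -> 0 < mlow ->
  (forall t, 0 <= t < T -> mlow <= m t <= mbar) ->
  0 < delta -> delta < (p - 1) / 2 ->
  (forall t, T0 < t < T -> 0 <= Derive (hfun A B p delta) t) ->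
  C1_on 0 T F F1 -> C1_on 0 T F1 F2 ->
  (forall t, T0 <= t < T -> A t <= F t) ->
  (forall t, 0 <= t < T ->
     B t * powR (Rabs (F t)) p <= m1 t * F1 t + m t * F2 t) ->
  0 <= F 0 -> 0 <= F1 0 -> 0 < F 0 + F1 0 ->
  (F1 0 = 0 -> 0 < ttil < T /\ 2 * F 0 <= F ttil) ->
  Rmax T0 (T1til mbar mlow (F 0) (F1 0) ttil) <= Ttil ->
  / delta * mbar * sqrt ((p + 1) / mlow)
    <= Ttil * hfun A B p delta Ttil * powR (A Ttil) delta ->
  T <= 3 * Ttil.
Proof.
  intros Hp HT0 HT0T [HAd [HAc HA1c]] [HBd [HBc HB1c]] [Hmd [Hmc Hm1c]]
    HApos HBpos Hmpos HBdec Hmbar Hmlow Hmb Hdel Hdel2 Hh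
    [HFd [HFc HF1c]] [HF1d [HF1c' HF2c]] HAF Hineq HF0 HF10 HF01 Httil HTt Hmain.
  destruct (Rle_or_lt T (3 * Ttil)) as [Hok|Hlt]; [exact Hok|exfalso].
  assert (HTT0 : T0 <= Ttil) by (eapply Rle_trans; [apply Rmax_l|exact HTt]).
  assert (Hsq : 0 < sqrt ((p + 1) / mlow)) by (apply sqrt_lt_R0; apply Rdiv_lt_0_compat; lra).
  assert (HL : 0 < / delta * mbar * sqrt ((p + 1) / mlow)).
  { apply Rmult_lt_0_compat; [apply Rmult_lt_0_compat|]; auto. apply Rinv_0_lt_compat; lra. }
  assert (HTpos : 0 < Ttil).
  { destruct (Req_dec Ttil 0) as [E|E]; [|lra]. rewrite E in Hmain. lra. }
  assert (HmF : forall s t, 0 <= s -> s <= t -> t < T -> m s * F1 s <= m t * F1 t).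
  { apply (mono_right (fun t => m t * F1 t) (fun t => m1 t * F1 t + m t * F2 t)).
    - intros x Hx. apply (is_derive_mult m F1 x (m1 x) (F2 x)).
      apply Hmd; lra. apply HF1d; lra. intros; apply Rmult_comm.
    - intros x Hx. eapply Rle_trans; [|apply Hineq; lra].
      apply Rmult_le_pos; [left; apply HBpos; lra|apply powR_ge0].
    - apply lim_mult; [apply within_filter; apply locally_filter| |].
      apply Hmc; lra. apply HF1c'; lra. }
  set (c0 := mlow * F1 0 / mbar).
  assert (Hc0 : 0 <= c0) by (unfold c0; apply Rmult_le_pos; [apply Rmult_le_pos; lra|left; apply Rinv_0_lt_compat; lra]).
  assert (HF1lo : forall t, 0 <= t < T -> c0 <= F1 t).
  { intros t Ht. pose proof (HmF 0 t ltac:(lra) ltac:(lra) ltac:(lra)) as H1.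
    pose proof (Hmb 0 ltac:(lra)) as H2. pose proof (Hmb t Ht) as H3.
    assert (E : c0 * mbar = mlow * F1 0) by (unfold c0; field; lra).
    destruct (Rle_or_lt c0 (F1 t)) as [|H4]; [assumption|exfalso].
    destruct (Rle_or_lt 0 (F1 t)) as [H5|H5]; nra. }
  assert (HFlin : forall t, 0 <= t < T -> F 0 + c0 * t <= F t).
  { intros t Ht.
    assert (H := mono_right (fun t => F t - c0 * t) (fun t => F1 t - c0) 0 T).
    simpl in H.
    assert (F 0 - c0 * 0 <= F t - c0 * t); [|lra].
    apply H; try lra.
    - intros x Hx. apply (is_derive_minus F (fun t => c0 * t)). apply HFd; lra.
      apply is_derive_eq with (c0 * 1). apply is_derive_scal. apply (is_derive_id (K:=R_AbsRing)). apply Rmult_1_r.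
    - intros x Hx. pose proof (HF1lo x ltac:(lra)). lra.
    - apply (lim_plus _ F (fun t => - (c0 * t))).
      apply HFc; lra.
      apply (cont_within (fun t => - (c0 * t))).
      apply (deriv_cont (fun t => - (c0 * t)) 0 (- c0)). auto_derive; auto; ring. }
  assert (HFmono : forall s t, 0 <= s -> s <= t -> t < T -> F s <= F t).
  { apply (mono_right F F1). intros; apply HFd; lra. intros x Hx. pose proof (HF1lo x ltac:(lra)); lra.
    apply HFc; lra. }
  assert (HFpos : forall t, 0 < t < T -> 0 < F t).
  { intros t Ht. pose proof (HFlin t ltac:(lra)).
    destruct (Req_dec (F1 0) 0) as [E|E].
    - assert (0 <= c0 * t) by (apply Rmult_le_pos; lra). lra.
    - assert (0 < c0 * t); [|lra]. apply Rmult_lt_0_compat; [|lra].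
      unfold c0. apply Rmult_lt_0_compat; [apply Rmult_lt_0_compat; lra|apply Rinv_0_lt_compat; lra]. }
  assert (HF2 : 2 * F 0 <= F Ttil).
  { unfold T1til in HTt. destruct (Req_EM_T (F1 0) 0) as [E|E].
    - destruct (Httil E) as [H1 H2].
      assert (ttil <= Ttil) by (eapply Rle_trans; [apply Rmax_r|exact HTt]).
      pose proof (HFmono ttil Ttil ltac:(lra) ltac:(lra) ltac:(lra)). lra.
    - assert (H1 : mbar / mlow * F 0 / F1 0 <= Ttil) by (eapply Rle_trans; [apply Rmax_r|exact HTt]).
      assert (HF1p : 0 < F1 0) by lra.
      pose proof (HFlin Ttil ltac:(lra)).
      assert (c0 * (mbar / mlow * F 0 / F1 0) = F 0) by (unfold c0; field; lra).
      assert (c0 * (mbar / mlow * F 0 / F1 0) <= c0 * Ttil) by (apply Rmult_le_compat_l; lra).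
      lra. }
  assert (HFT : 0 < F Ttil) by (apply HFpos; lra).
  assert (He8 : 0 < F Ttil / 8) by lra.
  pose proof (lim_ball F _ (F 0) (mkposreal _ He8) (HFc 0 ltac:(lra))) as [del Hdl].
  set (s0 := Rmin (del/2) Ttil).
  assert (Hs0 : 0 < s0) by (apply Rmin_pos; [pose proof (cond_pos del); lra| lra]).
  assert (Hs0T : s0 <= Ttil) by apply Rmin_r.
  assert (Hs0d : s0 <= del/2) by apply Rmin_l.
  assert (HFs0 : F s0 <= 5/8 * F Ttil).
  { assert (H : Rabs (F s0 - F 0) < F Ttil / 8).
    { apply (Hdl s0). apply ballR. rewrite Rminus_0_r, Rabs_right; pose proof (cond_pos del); lra. lra. }
    apply Rabs_def2 in H. lra. }
  assert (Hen : forall t, Ttil <= t < T -> mlow * B t / (p+1) * Rpower (F t) (p+1) <= (m t * F1 t) * (m t * F1 t)).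
  { intros t Ht.
    set (k := 2 * mlow * B t / (p+1)).
    assert (Hder : forall x, 0 < x < T -> is_derive (fun x => (m x * F1 x) * (m x * F1 x) - k * Rpower (F x) (p+1)) x
       (2 * (m x * F1 x) * (m1 x * F1 x + m x * F2 x) - k * (F1 x * ((p+1) * Rpower (F x) (p+1-1))))).
    { intros x Hx.
      assert (H1 : is_derive (fun x => m x * F1 x) x (m1 x * F1 x + m x * F2 x)).
      { apply (is_derive_mult m F1 x (m1 x) (F2 x)). apply Hmd; lra. apply HF1d; lra. intros; apply Rmult_comm. }
      assert (H2 : is_derive (fun x => Rpower (F x) (p+1)) x (F1 x * ((p+1) * Rpower (F x) (p+1-1)))).
      { apply is_derive_Rpower_comp. apply HFpos; lra. apply HFd; lra. }
      eapply is_derive_eq.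
      apply (is_derive_minus (fun x => (m x * F1 x) * (m x * F1 x)) (fun x => k * Rpower (F x) (p+1))).
      apply (is_derive_mult (fun x => m x * F1 x) (fun x => m x * F1 x)). exact H1. exact H1. intros; apply Rmult_comm.
      apply is_derive_scal. exact H2.
      unfold minus, plus, opp, mult; simpl. ring. }
    assert (HK := mono2 (fun x => (m x * F1 x) * (m x * F1 x) - k * Rpower (F x) (p+1))
       (fun x => 2 * (m x * F1 x) * (m1 x * F1 x + m x * F2 x) - k * (F1 x * ((p+1) * Rpower (F x) (p+1-1)))) s0 t).
    simpl in HK.
    assert (HK2 : (m s0 * F1 s0) * (m s0 * F1 s0) - k * Rpower (F s0) (p+1) <=
                  (m t * F1 t) * (m t * F1 t) - k * Rpower (F t) (p+1)).
    { apply HK.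
      - lra.
      - intros x Hx; apply Hder; lra.
      - intros x Hx. replace (p + 1 - 1) with p by ring.
        assert (HFx : 0 < F x) by (apply HFpos; lra).
        assert (HF1x : 0 <= F1 x) by (pose proof (HF1lo x ltac:(lra)); lra).
        assert (Hmx := Hmb x ltac:(lra)).
        assert (HBx : B t <= B x) by (apply HBdec; lra).
        assert (HBt : 0 < B t) by (apply HBpos; lra).
        assert (HQ := Hineq x ltac:(lra)).
        rewrite Rabs_right in HQ by lra. rewrite powR_pos in HQ by lra.
        assert (HP : 0 < Rpower (F x) p) by apply Rpower_pos.
        set (P := Rpower (F x) p) in *.
        assert (E : k * (F1 x * ((p + 1) * P)) = 2 * mlow * B t * F1 x * P) by (unfold k; field; lra).
        rewrite E.
        assert (H1 : mlow * F1 x <= m x * F1 x) by nra.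
        assert (H2 : B t * P <= B x * P) by nra.
        assert (H3 : 0 <= mlow * F1 x) by nra.
        assert (H4 : 0 <= B t * P) by nra.
        assert (H5 : (mlow * F1 x) * (B t * P) <= (m x * F1 x) * (B x * P)) by (apply Rmult_le_compat; lra).
        assert (H6 : (m x * F1 x) * (B x * P) <= (m x * F1 x) * (m1 x * F1 x + m x * F2 x)) by (apply Rmult_le_compat_l; lra).
        nra.
      - intros x Hx. apply continuity_pt_filterlim. exact (deriv_cont _ x _ (Hder x ltac:(lra))). }
    assert (HFt : F Ttil <= F t) by (apply HFmono; lra).
    assert (HFs0p : 0 < F s0) by (apply HFpos; lra).
    assert (HFtp : 0 < F t) by lra.
    assert (Hpow : Rpower (F s0) (p+1) <= 25/64 * Rpower (F t) (p+1)).
    { replace (p+1) with ((p-1)+2) by ring. rewrite !Rpower_plus, !Rpower2 by lra.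
      assert (H1 : Rpower (F s0) (p-1) <= Rpower (F t) (p-1)) by (apply Rle_Rpower_l; lra).
      assert (H2 : F s0 * F s0 <= 25/64 * (F t * F t)) by nra.
      pose proof (Rpower_pos (F s0) (p-1)).
      assert (H3 : Rpower (F s0) (p-1) * (F s0 * F s0) <= Rpower (F t) (p-1) * (25/64 * (F t * F t))).
      { apply Rmult_le_compat; nra. }
      lra. }
    assert (Hk : 0 <= k) by (unfold k; assert (0 < B t) by (apply HBpos; lra); apply Rmult_le_pos; [nra|left; apply Rinv_0_lt_compat; lra]).
    assert (Hsq0 : 0 <= (m s0 * F1 s0) * (m s0 * F1 s0)) by nra.
    assert (E : mlow * B t / (p + 1) = k / 2) by (unfold k; field; lra).
    rewrite E. pose proof (Rpower_pos (F t) (p+1)). nra. }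
  set (q := (p - 1) / 2 - delta).
  assert (Hq : 0 <= q) by (unfold q; lra).
  assert (Hhmono : forall t, Ttil <= t < T -> hfun A B p delta Ttil <= hfun A B p delta t).
  { intros t Ht. apply (mono_right (hfun A B p delta) (Derive (hfun A B p delta)) T0 T); try lra.
    - intros x Hx. apply Derive_correct. eexists. unfold hfun.
      apply (is_derive_mult (fun t => powR (B t) (1/2)) (fun t => powR (A t) ((p - 1) / 2 - delta))).
      apply is_derive_powR_comp. apply HBpos; lra. apply HBd; lra.
      apply is_derive_powR_comp. apply HApos; lra. apply HAd; lra.
      intros; apply Rmult_comm.
    - intros x Hx; apply Hh; lra.
    - unfold hfun. apply lim_mult. apply within_filter, locally_filter.
      + apply (filterlim_comp _ _ _ B (fun u => powR u (1/2)) _ (locally (B T0))).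
        apply (within_sub B (fun s => T0 <= s < T) (fun s => 0 <= s < T)); [intros; lra| apply HBc; lra].
        apply powR_cont; apply HBpos; lra.
      + apply (filterlim_comp _ _ _ A (fun u => powR u ((p - 1) / 2 - delta)) _ (locally (A T0))).
        apply HAc; lra.
        apply powR_cont; apply HApos; lra. }
  set (c := / (mbar * sqrt ((p + 1) / mlow))).
  assert (Hc : 0 < c) by (unfold c; apply Rinv_0_lt_compat; apply Rmult_lt_0_compat; lra).
  assert (Hcc : c * c * (mbar * mbar) = mlow / (p + 1)).
  { unfold c. rewrite <- Rinv_mult.
    replace (mbar * sqrt ((p + 1) / mlow) * (mbar * sqrt ((p + 1) / mlow))) with
      (mbar * mbar * (sqrt ((p + 1) / mlow) * sqrt ((p + 1) / mlow))) by ring.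
    rewrite sqrt_sqrt by (apply Rlt_le, Rdiv_lt_0_compat; lra). field. split; lra. }
  assert (HF1h : forall t, Ttil <= t < T -> c * hfun A B p delta t * Rpower (F t) (1 + delta) <= F1 t).
  { intros t Ht.
    assert (HAt : 0 < A t) by (apply HApos; lra).
    assert (HBt : 0 < B t) by (apply HBpos; lra).
    assert (HFt : 0 < F t) by (apply HFpos; lra).
    assert (HAFt : A t <= F t) by (apply HAF; lra).
    assert (HF1t : 0 <= F1 t) by (pose proof (HF1lo t ltac:(lra)); lra).
    assert (Hmt := Hmb t ltac:(lra)).
    assert (Hent := Hen t Ht).
    unfold hfun. rewrite !powR_pos by lra. fold q.
    set (X := c * (Rpower (B t) (1 / 2) * Rpower (A t) q) * Rpower (F t) (1 + delta)).
    assert (HX : 0 <= X).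
    { unfold X. pose proof (Rpower_pos (B t) (1/2)). pose proof (Rpower_pos (A t) q).
      pose proof (Rpower_pos (F t) (1 + delta)). apply Rmult_le_pos; [|lra]. apply Rmult_le_pos; [lra|]. nra. }
    set (Y := Rpower (F t) (p + 1)).
    assert (HBB : Rpower (B t) (1/2) * Rpower (B t) (1/2) = B t).
    { rewrite <- Rpower_plus. replace (1/2 + 1/2) with 1 by field. apply Rpower_1; lra. }
    assert (HAA : Rpower (A t) q * Rpower (A t) q <= Rpower (F t) q * Rpower (F t) q).
    { assert (Rpower (A t) q <= Rpower (F t) q) by (apply Rle_Rpower_l; lra).
      pose proof (Rpower_pos (A t) q). apply Rmult_le_compat; lra. }
    assert (HFF : Rpower (F t) q * Rpower (F t) q * (Rpower (F t) (1 + delta) * Rpower (F t) (1 + delta)) = Y).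
    { unfold Y. rewrite <- !Rpower_plus. f_equal. unfold q; field. }
    assert (HXX : X * X <= c * c * B t * Y).
    { unfold X. rewrite <- HFF.
      pose proof (Rpower_pos (F t) (1 + delta)). pose proof (Rpower_pos (B t) (1/2)).
      set (u := Rpower (F t) (1 + delta)) in *. set (v := Rpower (B t) (1/2)) in *.
      replace (c * (v * Rpower (A t) q) * u * (c * (v * Rpower (A t) q) * u)) with
        ((c * c * (v * v) * (u * u)) * (Rpower (A t) q * Rpower (A t) q)) by ring.
      replace (c * c * B t * (Rpower (F t) q * Rpower (F t) q * (u * u))) with
        ((c * c * (v * v) * (u * u)) * (Rpower (F t) q * Rpower (F t) q)) by (rewrite <- HBB; ring).
      apply Rmult_le_compat_l; [|exact HAA].
      assert (0 <= c * c) by nra. assert (0 <= v * v) by nra. assert (0 <= u * u) by nra.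
      apply Rmult_le_pos; [apply Rmult_le_pos|]; lra. }
    assert (HY : 0 < Y) by apply Rpower_pos.
    assert (H1 : c * c * B t * Y * (mbar * mbar) <= F1 t * F1 t * (mbar * mbar)).
    { replace (c * c * B t * Y * (mbar * mbar)) with (c * c * (mbar * mbar) * B t * Y) by ring.
      rewrite Hcc.
      assert (mlow / (p + 1) * B t * Y = mlow * B t / (p + 1) * Y) by (field; lra).
      assert (m t * F1 t * (m t * F1 t) <= F1 t * F1 t * (mbar * mbar)).
      { replace (m t * F1 t * (m t * F1 t)) with ((m t * m t) * (F1 t * F1 t)) by ring.
        rewrite (Rmult_comm (F1 t * F1 t)). apply Rmult_le_compat_r; [nra|]. apply Rmult_le_compat; lra. }
      change (Rpower (F t) (p+1)) with Y in Hent. lra. }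
    assert (H2 : c * c * B t * Y <= F1 t * F1 t).
    { apply Rmult_le_reg_r with (mbar * mbar); [nra|exact H1]. }
    fold X. nra. }
  set (hT := hfun A B p delta Ttil).
  assert (HhT : 0 <= hT) by (unfold hT, hfun; apply Rmult_le_pos; apply powR_ge0).
  set (K := delta * c * hT).
  assert (HKp : 0 <= K) by (unfold K; apply Rmult_le_pos; [nra|lra]).
  assert (HGd : forall x, 0 < x < T -> is_derive (fun x => K * (Ttil - x) - Rpower (F x) (- delta)) x
      (- K - F1 x * (- delta * Rpower (F x) (- delta - 1)))).
  { intros x Hx. eapply is_derive_eq.
    apply (is_derive_minus (fun x => K * (Ttil - x)) (fun x => Rpower (F x) (- delta))).
    - assert (is_derive (fun x => K * (Ttil - x)) x (- K)) by (auto_derive; auto; ring). eassumption.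
    - apply is_derive_Rpower_comp. apply HFpos; lra. apply HFd; lra.
    - unfold minus, plus, opp; simpl. ring. }
  assert (HG := mono2 (fun x => K * (Ttil - x) - Rpower (F x) (- delta))
      (fun x => - K - F1 x * (- delta * Rpower (F x) (- delta - 1))) Ttil (2 * Ttil)).
  simpl in HG.
  assert (HG2 : K * (Ttil - Ttil) - Rpower (F Ttil) (- delta) <= K * (Ttil - 2 * Ttil) - Rpower (F (2 * Ttil)) (- delta)).
  { apply HG.
    - lra.
    - intros x Hx; apply HGd; lra.
    - intros x Hx.
      assert (HFx : 0 < F x) by (apply HFpos; lra).
      assert (H1 := HF1h x ltac:(lra)).
      assert (H2 := Hhmono x ltac:(lra)). fold hT in H2.
      pose proof (Rpower_pos (F x) (1 + delta)) as H3.
      pose proof (Rpower_pos (F x) (- delta - 1)) as H4.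
      assert (H5 : Rpower (F x) (1 + delta) * Rpower (F x) (- delta - 1) = 1).
      { rewrite <- Rpower_plus. replace (1 + delta + (- delta - 1)) with 0 by ring. apply Rpower_O; lra. }
      assert (H6 : c * hT * Rpower (F x) (1 + delta) <= F1 x).
      { eapply Rle_trans; [|exact H1]. apply Rmult_le_compat_r; [lra|]. apply Rmult_le_compat_l; lra. }
      assert (H7 : c * hT <= F1 x * Rpower (F x) (- delta - 1)).
      { replace (c * hT) with (c * hT * Rpower (F x) (1 + delta) * Rpower (F x) (- delta - 1)) by
          (rewrite Rmult_assoc, H5; ring).
        apply Rmult_le_compat_r; lra. }
      unfold K. nra.
    - intros x Hx. apply continuity_pt_filterlim. exact (deriv_cont _ x _ (HGd x ltac:(lra))). }
  assert (HAT : 0 < A Ttil) by (apply HApos; lra).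
  assert (HFTA : Rpower (F Ttil) (- delta) <= / Rpower (A Ttil) delta).
  { rewrite Rpower_Ropp. apply Rinv_le_contravar. apply Rpower_pos.
    apply Rle_Rpower_l; [lra|]. split; [lra|]. apply HAF; lra. }
  rewrite powR_pos in Hmain by lra. fold hT in Hmain.
  set (Ra := Rpower (A Ttil) delta) in *.
  assert (HRa : 0 < Ra) by apply Rpower_pos.
  assert (E1 : delta * c * (/ delta * mbar * sqrt ((p + 1) / mlow)) = 1) by (unfold c; field; lra).
  assert (E2 : 1 <= K * Ttil * Ra).
  { rewrite <- E1. unfold K. replace (delta * c * hT * Ttil * Ra) with (delta * c * (Ttil * hT * Ra)) by ring.
    apply Rmult_le_compat_l; [nra|exact Hmain]. }
  assert (E3 : / Ra <= K * Ttil).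
  { replace (K * Ttil) with ((K * Ttil * Ra) * / Ra) by (field; lra).
    pose proof (Rinv_0_lt_compat Ra HRa). nra. }
  pose proof (Rpower_pos (F (2 * Ttil)) (- delta)).
  lra.
Qed.
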